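(* For integers $m\ge1$, $1\le i\le m$ and $n\ge0$, $$\sum_{\lambda\vdash n}X_{m,i}(\lambda)=\sum_{k\ge1}p(n-k)\sum_{d\mid k}\left\lfloor\frac{d+m-i}{m}\right\rfloor,$$ where the left sum is over all partitions $\lambda$ of $n$, $p$ is the partition function, and $p(N)=0$ for $N<0$.
   Context: For a partition $\lambda:\ n=\lambda_1+\dots+\lambda_k$ with $\lambda_1\ge\dots\ge\lambda_k\ge1$, $X_{m,i}(\lambda)=\sum_{j\equiv i\pmod m}\lambda_j$, the sum of the parts whose index is congruent to $i$ modulo $m$. *)

(* Defs.v *)
From mathcomp Require Import all_boot.
Set Implicit Arguments. Unset Strict Implicit. Unset Printing Implicit Defensive.

(* A partition of n is encoded as its sequence of parts padded with zeros to
   length n: l : {ffun 'I_n -> 'I_n.+1}, l 0 >= l 1 >= ... >= l (n-1) >= 0,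
   with sum n.  The nonzero entries are exactly the parts lambda_1 >= ... >= lambda_k
   (k <= n), so this is in bijection with partitions of n.  Index j : 'I_n
   stands for the (j+1)-th part. *)
Definition is_partition (n : nat) (l : {ffun 'I_n -> 'I_n.+1}) : bool :=
  [forall i : 'I_n, forall j : 'I_n, (i <= j) ==> (l j <= l i)] &&
  (\sum_(j < n) (l j : nat) == n).

Definition partitions (n : nat) : {set {ffun 'I_n -> 'I_n.+1}} :=
  [set l | is_partition l].

Definition npart (N : nat) : nat := #|partitions N|.

Definition Xmi (m i n : nat) (l : {ffun 'I_n -> 'I_n.+1}) : nat :=
  \sum_(j < n | j.+1 == i %[mod m]) (l j : nat).

(* Main.v *)
Require Import Defs.
From mathcomp Require Import all_boot zify.
Set Implicit Arguments. Unset Strict Implicit. Unset Printing Implicit Defensive.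

Definition get n (l : {ffun 'I_n -> 'I_n.+1}) (k : nat) : nat :=
  oapp (fun x : 'I_n => nat_of_ord (l x)) 0 (insub k).

Definition mk n (f : nat -> nat) : {ffun 'I_n -> 'I_n.+1} := [ffun x : 'I_n => inord (f x)].

Lemma get_ord n (l : {ffun 'I_n -> 'I_n.+1}) (x : 'I_n) : get l x = l x.
Proof. by rewrite /get valK. Qed.

Lemma get_ge n (l : {ffun 'I_n -> 'I_n.+1}) k : n <= k -> get l k = 0.
Proof. by move=> h; rewrite /get insubN // -leqNgt. Qed.

Lemma get_le n (l : {ffun 'I_n -> 'I_n.+1}) k : get l k <= n.
Proof.
case: (ltnP k n) => h; last by rewrite get_ge.
by rewrite -[k]/(nat_of_ord (Ordinal h)) get_ord -ltnS.
Qed.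

Lemma get_inj n (l1 l2 : {ffun 'I_n -> 'I_n.+1}) :
  (forall k, k < n -> get l1 k = get l2 k) -> l1 = l2.
Proof.
move=> h; apply/ffunP => x; apply/val_inj => /=.
by rewrite -!get_ord h.
Qed.

Lemma get_mk n f k : k < n -> f k <= n -> get (mk n f) k = f k.
Proof.
move=> h hf; rewrite -[k]/(nat_of_ord (Ordinal h)) get_ord ffunE inordK //.
Qed.

Lemma sum_get n (l : {ffun 'I_n -> 'I_n.+1}) :
  \sum_(j < n) (l j : nat) = \sum_(0 <= k < n) get l k.
Proof. by rewrite big_mkord; apply: eq_bigr => j _; rewrite get_ord. Qed.

Lemma inPP n (l : {ffun 'I_n -> 'I_n.+1}) :
  reflect ((forall a b, a <= b -> get l b <= get l a) /\ \sum_(0 <= k < n) get l k = n)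
          (l \in partitions n).
Proof.
rewrite inE /is_partition sum_get.
apply: (iffP andP) => [[/forallP H /eqP HS]|[H HS]]; split => //; last by apply/eqP.
- move=> a b ab; case: (ltnP b n) => hb; last by rewrite get_ge.
  have ha : a < n by apply: leq_ltn_trans hb.
  have := H (Ordinal ha) => /forallP /(_ (Ordinal hb)) /implyP /(_ ab).
  by rewrite -!get_ord.
- apply/forallP => x; apply/forallP => y; apply/implyP => xy.
  by rewrite -!get_ord; apply: H.
Qed.

Lemma Zlem (g : nat -> nat) n N k : (forall a b, a <= b -> g b <= g a) ->
  \sum_(0 <= j < n) g j = N -> k < n -> k.+1 * g k <= N.
Proof.
move=> mon hs kn.
rewrite -hs (big_cat_nat (leq0n k.+1) kn) /=.
apply: leq_trans (leq_addr _ _).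
rewrite -[k.+1]subn0 -sum_nat_const_nat.
rewrite big_nat_cond [X in _ <= X]big_nat_cond.
by apply: leq_sum => j /andP[/andP[_ jk] _]; apply: mon; rewrite -ltnS.
Qed.

Lemma sum_ind n d r : d <= n -> \sum_(0 <= k < n) (k < d) * r = d * r.
Proof.
move=> dn; rewrite (big_cat_nat (leq0n d) dn) /=.
rewrite (eq_big_nat _ _ (F2 := fun _ => r)); last by move=> k /andP[_ ->]; rewrite mul1n.
rewrite sum_nat_const_nat subn0 (eq_big_nat _ _ (F2 := fun _ => 0)).
  by rewrite sum_nat_const_nat muln0 addn0.
by move=> k /andP[dk _]; rewrite ltnNge dk.
Qed.

Lemma sum_zero_tail (g : nat -> nat) N n : N <= n -> (forall k, N <= k -> k < n -> g k = 0) ->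
  \sum_(0 <= k < n) g k = \sum_(0 <= k < N) g k.
Proof.
move=> Nn h; rewrite (big_cat_nat (leq0n N) Nn) /= [X in _ + X](eq_big_nat _ _ (F2 := fun _ => 0)).
  by rewrite sum_nat_const_nat muln0 addn0.
by move=> k /andP[a b]; apply: h.
Qed.

Definition Aset n d r := [set l in partitions n | get l d + r <= get l d.-1].

Lemma cardA_big n d r (d0 : 0 < d) (dn : d <= n) (r0 : 0 < r) : n < r * d -> #|Aset n d r| = 0.
Proof.
move=> big; apply/eqP; rewrite cards_eq0; apply/eqP/setP => l; rewrite in_set in_set0.
apply/negbTE/andP => [[/inPP [mon hs] c]].
have := Zlem mon hs (k := d.-1) ltac:(lia).
rewrite prednK //; nia.
Qed.

Lemma cardA_small n d r (d0 : 0 < d) (dn : d <= n) (r0 : 0 < r) : r * d <= n -> #|Aset n d r| = npart (n - r * d).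
Proof.
move=> small; set N := n - r * d.
pose phi (mu : {ffun 'I_N -> 'I_N.+1}) := mk n (fun k => get mu k + (k < d) * r).
have getphi mu k : get (phi mu) k = get mu k + (k < d) * r.
  case: (ltnP k n) => kn.
    rewrite get_mk //; have := get_le mu k; case: (k < d); nia.
  rewrite !get_ge //; last by lia.
  by have -> : (k < d) = false by apply/negbTE; rewrite -leqNgt; apply: leq_trans kn.
have phi_inj : injective phi.
  move=> mu1 mu2 e; apply: get_inj => k kN.
  by have := getphi mu1 k; rewrite e getphi => /eqP; rewrite eqn_add2r => /eqP.
have -> : Aset n d r = phi @: partitions N.
  apply/setP => l; rewrite inE; apply/idP/idP.
  - case/andP => /inPP [mon hs] c.
    pose g k := get l k - (k < d) * r.
    have gge k : (k < d) * r <= get l k.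
      case: (ltnP k d) => kd; last by rewrite mul0n.
      have : get l d.-1 <= get l k by apply: mon; lia.
      lia.
    have gmon : forall a b, a <= b -> g b <= g a.
      move=> a b ab; rewrite /g.
      have := mon _ _ ab; have := gge a; have := gge b.
      case: (ltnP a d) => ad; case: (ltnP b d) => bd; rewrite ?mul1n ?mul0n ?subn0; try lia.
      have := mon _ _ bd; have : get l d.-1 <= get l a by apply: mon; lia.
      lia.
    have gs : \sum_(0 <= k < n) g k = N.
      have : \sum_(0 <= k < n) (g k + (k < d) * r) = n.
        by rewrite -{2}hs; apply: eq_big_nat => k _; rewrite /g subnK.
      rewrite big_split /= sum_ind //; rewrite /N; lia.
    have gz k : N <= k -> g k = 0.
      move=> Nk; case: (ltnP k n) => kn.
        have := Zlem gmon gs kn; nia.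
      by rewrite /g get_ge //; lia.
    have gb k : g k <= N.
      case: (ltnP k n) => kn; first by have := Zlem gmon gs kn; nia.
      by rewrite gz //; lia.
    pose mu := mk N g.
    have getmu k : get mu k = g k.
      case: (ltnP k N) => kN; first by rewrite get_mk.
      by rewrite get_ge // gz.
    apply/imsetP; exists mu.
      apply/inPP; split; first by move=> a b ab; rewrite !getmu; apply: gmon.
      rewrite (eq_big_nat _ _ (F2 := g)); last by move=> k _; apply: getmu.
      rewrite -(sum_zero_tail (n := n)) //; first by rewrite /N; lia.
      by move=> k Nk _; apply: gz.
    apply: get_inj => k kn; rewrite getphi getmu /g subnK //.
  - case/imsetP => mu /inPP [mon hs] ->; apply/andP; split.
      apply/inPP; split.
        move=> a b ab; rewrite !getphi; apply: leq_add; first exact: mon.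
        case: (ltnP b d) => bd; last by rewrite mul0n.
        by have -> : a < d by lia.
      rewrite (eq_big_nat _ _ (F2 := fun k => get mu k + (k < d) * r)); last by move=> k _; apply: getphi.
      rewrite big_split /= sum_ind // (sum_zero_tail (N := N)) ?hs; first by rewrite /N; nia.
        by rewrite /N; lia.
      by move=> k Nk _; rewrite get_ge.
    rewrite !getphi ltnn mul0n addn0.
    have -> : d.-1 < d by lia.
    by rewrite mul1n leq_add2r; apply: mon; lia.
by rewrite card_in_imset //; move=> x y _ _; apply: phi_inj.
Qed.



Lemma tele (g : nat -> nat) j b : (forall a b, a <= b -> g b <= g a) -> j <= b ->
  g j - g b = \sum_(j.+1 <= d < b.+1) (g d.-1 - g d).
Proof.
move=> mon; elim: b => [|b IH] jb.
  have -> : j = 0 by lia.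
  by rewrite big_geq // subnn.
case: (ltnP b j) => bj.
  have -> : j = b.+1 by lia.
  by rewrite big_geq // subnn.
rewrite big_nat_recr /=; last by lia.
rewrite -IH //; have := mon _ _ bj; have := mon b b.+1 (leqnSn b); lia.
Qed.

Lemma count_le x n : x <= n -> x = \sum_(1 <= r < n.+1) (r <= x).
Proof.
move=> xn; rewrite (big_cat_nat (n := x.+1)) //= ?ltnS //.
rewrite [X in _ + X](eq_big_nat _ _ (F2 := fun _ => 0)); last first.
  by move=> k /andP[a _]; rewrite leqNgt a.
rewrite (eq_big_nat _ _ (F2 := fun _ => 1)); last by move=> k /andP[_ a]; rewrite -ltnS a.
by rewrite !sum_nat_const_nat; lia.
Qed.

Lemma sum_ind_card (T : finType) (A : {set T}) (b : pred T) :
  \sum_(l in A) (b l : nat) = #|[set l in A | b l]|.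
Proof.
rewrite -sum1_card big_mkcond [RHS]big_mkcond /=; apply: eq_bigr => l _.
by rewrite in_set; case: (l \in A); case: (b l).
Qed.

Lemma key n j : j < n ->
  \sum_(l in partitions n) get l j =
  \sum_(j.+1 <= d < n.+1) \sum_(1 <= r < n.+1) (r * d <= n) * npart (n - r * d).
Proof.
move=> jn.
rewrite (eq_bigr (fun l => \sum_(j.+1 <= d < n.+1) \sum_(1 <= r < n.+1)
                       (get l d + r <= get l d.-1) : nat)); last first.
  move=> l /inPP [mon _].
  transitivity (get l j - get l n); first by rewrite (get_ge l (leqnn n)) subn0.
  rewrite (tele mon); last by lia.
  apply: eq_big_nat => d _.
  rewrite {1}(count_le (x := get l d.-1 - get l d) (n := n)); last first.
    have := get_le l d.-1; lia.
  apply: eq_big_nat => r _; congr nat_of_bool; apply/idP/idP; have := mon d.-1 d; lia.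
rewrite exchange_big; apply: eq_big_nat => d /andP[jd dn].
rewrite exchange_big; apply: eq_big_nat => r /andP[r0 _].
rewrite (sum_ind_card (partitions n) (fun l => get l d + r <= get l d.-1)).
have d0 : 0 < d by lia.
have dn' : d <= n by lia.
case: (leqP (r * d) n) => h.
  by rewrite mul1n -(cardA_small d0 dn' r0 h).
by rewrite mul0n -(cardA_big d0 dn' r0 h).
Qed.

Lemma widen a' a b b' (F : nat -> nat) : a' <= a -> a <= b -> b <= b' ->
  \sum_(a <= x < b) F x = \sum_(a' <= x < b') (a <= x < b) * F x.
Proof.
move=> h1 h2 h3.
rewrite (big_cat_nat (n := a) h1 (leq_trans h2 h3)) /=.
rewrite [X in _ = X + _](eq_big_nat _ _ (F2 := fun _ => 0)); last first.
  by move=> x /andP[_ xa]; rewrite leqNgt xa.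
rewrite (big_cat_nat (n := b) h2 h3) /=.
rewrite [X in _ = _ + (_ + X)](eq_big_nat _ _ (F2 := fun _ => 0)); last first.
  by move=> x /andP[bx _]; rewrite ltnNge bx andbF.
rewrite !sum_nat_const_nat !muln0 add0n addn0.
by apply: eq_big_nat => x ->; rewrite mul1n.
Qed.

Lemma pick a b x (F : nat -> nat) :
  \sum_(a <= k < b) (x == k) * F k = (a <= x < b) * F x.
Proof.
elim: b => [|b IH]; first by rewrite big_geq // ltn0 andbF.
case: (leqP a b) => ab.
  rewrite big_nat_recr //= IH.
  case: (eqVneq x b) => [->|xb].
    by rewrite ltnn andbF mul0n add0n ab ltnSn mul1n.
  have -> : (x < b.+1) = (x < b) by rewrite ltnS [x <= b]leq_eqVlt (negbTE xb).
  by rewrite mul0n addn0.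
rewrite big_geq //; case: (leqP a x) => ax //=.
by have -> : x < b.+1 = false by lia.
Qed.

Lemma dvd_count n d k : 0 < d -> 0 < k -> k <= n ->
  (d %| k : nat) = \sum_(1 <= r < n.+1) (r * d == k).
Proof.
move=> d0 k0 kn.
case: (boolP (d %| k)) => h.
  rewrite -{1}(divnK h).
  rewrite (eq_big_nat _ _ (F2 := fun r => (k %/ d == r) * 1)); last first.
    by move=> r _; rewrite eqn_pmul2r // eq_sym muln1.
  rewrite pick muln1.
  have kd : d <= k by apply: dvdn_leq.
  have : 0 < k %/ d by rewrite divn_gt0.
  have : k %/ d <= k by apply: leq_div.
  by move=> a b; rewrite b /= ltnS (leq_trans a kn).
rewrite (eq_big_nat _ _ (F2 := fun _ => 0)); first by rewrite sum_nat_const_nat muln0.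
move=> r _; case: (eqVneq (r * d) k) => // e.
by move: h; rewrite -e dvdn_mull.
Qed.

Lemma reindexd n d (F : nat -> nat) : 0 < d ->
  \sum_(1 <= r < n.+1) (r * d <= n) * F (r * d) = \sum_(1 <= k < n.+1) (d %| k) * F k.
Proof.
move=> d0.
rewrite [RHS](eq_big_nat _ _ (F2 := fun k => \sum_(1 <= r < n.+1) (r * d == k) * F k)); last first.
  move=> k /andP[k0 kn]; have kn' : k <= n by lia.
  by rewrite (dvd_count d0 k0 kn') big_distrl.
rewrite exchange_big; apply: eq_big_nat => r /andP[r0 _].
rewrite pick; congr (_ * _); congr nat_of_bool.
rewrite ltnS; have : 0 < r * d by rewrite muln_gt0 r0.
by move=> ->.
Qed.

Lemma fcount m i d : 0 < m -> 0 < i -> i <= m ->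
  (d + m - i) %/ m = \sum_(0 <= j < d) (j.+1 == i %[mod m]).
Proof.
move=> m0 i0 im; elim: d => [|d IH].
  by rewrite big_geq // divn_small //; lia.
rewrite big_nat_recr //= -IH.
have -> : d.+1 + m - i = (d + m - i).+1 by lia.
rewrite divnS // addnC; congr (_ + _); congr nat_of_bool.
rewrite -(eqn_modDr (m - i)) subnKC // modnn.
have -> : d.+1 + (m - i) = (d + m - i).+1 by lia.
by rewrite /dvdn.
Qed.

Theorem mainTheorem8 (m i n : nat) (hm : 1 <= m) (hi1 : 1 <= i) (him : i <= m) :
  \sum_(l in partitions n) Xmi m i l =
  \sum_(1 <= k < n.+1) npart (n - k) *
     \sum_(1 <= d < k.+1 | d %| k) ((d + m - i) %/ m).
Proof.
set c := fun j => (j.+1 == i %[mod m]).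
set T := fun j d k => c j * (j < d) * (d %| k) * npart (n - k).
transitivity (\sum_(0 <= j < n) \sum_(1 <= d < n.+1) \sum_(1 <= k < n.+1) T j d k).
  rewrite /Xmi exchange_big /= big_mkcond /=.
  rewrite [RHS]big_mkord; apply: eq_bigr => j _.
  rewrite (eq_bigr (fun l => get l j)); last by move=> l _; rewrite get_ord.
  rewrite key //.
  rewrite (eq_big_nat _ _ (F2 := fun d => \sum_(1 <= k < n.+1) (d %| k) * npart (n - k))); last first.
    move=> d /andP[jd _]; have d0 : 0 < d by lia.
    exact: (reindexd n (fun k => npart (n - k)) d0).
  rewrite (widen (a' := 1) (b' := n.+1)) //.
  rewrite -/(c j).
  transitivity (c j * \sum_(1 <= x < n.+1) (j < x < n.+1) *
      \sum_(1 <= k < n.+1) (x %| k) * npart (n - k)).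
    by case: (c j); rewrite ?mul1n ?mul0n.
  rewrite big_distrr; apply: eq_big_nat => d /andP[d1 dn].
  rewrite /= mulnA big_distrr; apply: eq_big_nat => k _.
  by rewrite /= /T dn andbT !mulnA.
  by rewrite ltnS ltnW.
symmetry.
rewrite (eq_big_nat _ _ (F2 := fun k => \sum_(1 <= d < n.+1) \sum_(0 <= j < n) T j d k)); last first.
  move=> k /andP[k1 kn].
  rewrite big_mkcond /= (widen (a' := 1) (b' := n.+1)) // big_distrr.
  apply: eq_big_nat => d /andP[d1 dn].
  case: (boolP (d %| k)) => h; last first.
    rewrite /= !muln0 big1_seq // => j _; by rewrite /T (negbTE h) muln0 mul0n.
  have dk : d <= k by apply: dvdn_leq; lia.
  have dn' : d <= n by lia.
  rewrite d1 ltnS dk fcount // (widen (a' := 0) (b' := n)) //.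
  rewrite /= mul1n big_distrr; apply: eq_big_nat => j _.
  rewrite /T /c h /= muln1.
  by case: (j < d); case: (j.+1 == i %[mod m]); rewrite /= ?muln0 ?mul0n ?muln1 ?mul1n.
rewrite [LHS]exchange_big.
rewrite (eq_big_nat _ _ (F2 := fun d => \sum_(0 <= j < n) \sum_(1 <= k < n.+1) T j d k)); last first.
  by move=> d _; rewrite exchange_big.
by rewrite exchange_big.
Qed.
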